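(* Let $R$ be a commutative domain, $B=R(t,\sigma,H,J)$, assume $\sigma^n=\mathrm{id}_R$ and let $\mathcal O$ be a $\sigma$-orbit in $\operatorname{Maxspec}(R)$ of size $n$ containing at least one break. Let $M$ be a simple $B$-module which is an $R$-weight module with $\operatorname{Supp}_R(M)\subseteq\mathcal O$, and let $\mathfrak m\in\mathcal O$ be a break. Then $\mathfrak m$ is not both a $J$-break and an $H$-break for $M$. If $\mathfrak m$ is a $J$-break (resp. $H$-break) for $M$, then every break in $\mathcal O$ is a $J$-break (resp. $H$-break) for $M$, and $\operatorname{Supp}_R(M)=\mathcal O$.
   Context: $\Bbbk$ is a field; all algebras are associative unital $\Bbbk$-algebras. For an algebra $R$ and $\sigma\in\operatorname{Aut}_\Bbbk(R)$, $R[t,t^{-1};\sigma]$ is the skew Laurent ring: generated over $R$ by $t,t^{-1}$ with $tt^{-1}=t^{-1}t=1$ and $t^{\pm1}r=\sigma^{\pm1}(r)t^{\pm1}$ for $r\in R$. Given two-sided ideals $H,J$ of $R$, set $I^{(0)}=R$, $I^{(n)}=J\sigma(J)\cdots\sigma^{n-1}(J)$ for $n\ge1$, and $I^{(n)}=\sigma^{-1}(H)\sigma^{-2}(H)\cdots\sigma^{n}(H)$ for $n\le-1$; it is assumed throughout that $I^{(n)}\neq0$ for all $n\in\mathbb Z$. The Bell–Rogalski (BR) algebra is $R(t,\sigma,H,J)=\bigoplus_{n\in\mathbb Z}I^{(n)}t^n\subseteq R[t,t^{-1};\sigma]$. For $R$ commutative, $\mathcal S(B)=\{\mathfrak p\in\operatorname{Spec}(R):\mathfrak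 p\supseteq HJ\}$; a maximal ideal $\mathfrak m$ is a break if $\sigma(\mathfrak m)\in\mathcal S(B)$. A left $B$-module $M$ is an $R$-weight module if $M=\bigoplus_{\mathfrak m}M_{\mathfrak m}$, $M_{\mathfrak m}=\{v:\mathfrak mv=0\}$, each $\dim_{R/\mathfrak m}M_{\mathfrak m}<\infty$; $\operatorname{Supp}_R(M)=\{\mathfrak m:M_{\mathfrak m}\ne0\}$. $\sigma$-orbits are orbits of $k\cdot\mathfrak m=\sigma^k(\mathfrak m)$. For a weight module $M$ and a break $\mathfrak m$: $\mathfrak m$ is a $J$-break for $M$ if there exist $j\in J$ and $v\in M_{\mathfrak m}$ with $(jt)v\neq0$; $\mathfrak m$ is an $H$-break for $M$ if there exist $h\in H$ and $w\in M_{\sigma(\mathfrak m)}$ with $(\sigma^{-1}(h)t^{-1})w\neq0$. *)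

(* Defs.v *)
From HB Require Import structures.
From mathcomp Require Import all_boot all_order all_algebra.
Set Implicit Arguments. Unset Strict Implicit. Unset Printing Implicit Defensive.
Import Order.TTheory GRing.Theory Num.Theory.
Local Open Scope ring_scope.

Section BR.
Variable R : comNzRingType.

Definition seteq (A B : R -> Prop) := forall x, A x <-> B x.
Definition subset_of (A B : R -> Prop) := forall x, A x -> B x.

Definition is_ideal (I : R -> Prop) :=
  [/\ I 0, (forall x y, I x -> I y -> I (x + y)) & (forall r x, I x -> I (r * x))].

Definition maximal_ideal (m : R -> Prop) :=
  [/\ is_ideal m, ~ m 1 &
      forall I, is_ideal I -> subset_of m I -> seteq I m \/ I 1].

Definition prime_ideal (p : R -> Prop) :=
  [/\ is_ideal p, ~ p 1 & forall a b, p (a * b) -> p a \/ p b].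

Definition idealprod (A B : R -> Prop) : R -> Prop := fun x =>
  exists (k : nat) (a b : nat -> R),
    (forall i, (i < k)%N -> A (a i) /\ B (b i)) /\ x = \sum_(i < k) a i * b i.

Variables (s si : R -> R).  (* sigma and its inverse *)

Definition spow (z : int) (x : R) : R :=
  match z with Posz n => iter n s x | Negz n => iter n.+1 si x end.

(* image of a subset under sigma^z, i.e. preimage under sigma^(-z) *)
Definition simg (z : int) (I : R -> Prop) : R -> Prop := fun x => I (spow (- z) x).

Variables (H J : R -> Prop).

(* I^(n) for n >= 0 : J sigma(J) ... sigma^(n-1)(J) *)
Fixpoint Ipos (n : nat) : R -> Prop :=
  match n with
  | 0 => fun _ => True
  | 1 => J
  | k.+1 => idealprod (Ipos k) (fun x => J (iter k si x))
  end.

(* I^(-n) for n >= 1 : sigma^-1(H) sigma^-2(H) ... sigma^-n(H) *)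
Fixpoint Ineg (n : nat) : R -> Prop :=
  match n with
  | 0 => fun _ => True
  | 1 => fun x => H (s x)
  | k.+1 => idealprod (Ineg k) (fun x => H (iter k.+1 s x))
  end.

Definition Iz (z : int) : R -> Prop :=
  match z with Posz n => Ipos n | Negz n => Ineg n.+1 end.

Definition in_SB (p : R -> Prop) := prime_ideal p /\ subset_of (idealprod H J) p.
Definition is_break (m : R -> Prop) := maximal_ideal m /\ in_SB (simg 1 m).

Definition in_sorbit (m0 m : R -> Prop) := exists k : int, seteq m (simg k m0).

Variable M : zmodType.
(* A left B-module structure on M, B = R(t,sigma,H,J) = (+)_n I^(n) t^n,
   given by the action rho n a of the homogeneous element a t^n (a in I^(n)),
   extended additively. *)
Variable rho : int -> R -> M -> M.

Definition is_BR_module :=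
  [/\ (forall n a v w, Iz n a -> rho n a (v + w) = rho n a v + rho n a w),
      (forall n a b v, Iz n a -> Iz n b -> rho n (a + b) v = rho n a v + rho n b v),
      (forall v, rho 0 1 v = v) &
      (forall m n a b v, Iz m a -> Iz n b ->
          rho m a (rho n b v) = rho (m + n) (a * spow m b) v)].

Definition submodule (N : M -> Prop) :=
  [/\ N 0, (forall v w, N v -> N w -> N (v + w)), (forall v, N v -> N (- v)) &
      (forall n a v, Iz n a -> N v -> N (rho n a v))].

Definition simple_module :=
  (exists v : M, v != 0) /\
  forall N, submodule N -> (forall v, N v -> v = 0) \/ (forall v, N v).

Definition wt (m : R -> Prop) (v : M) := forall r, m r -> rho 0 r v = 0.

Definition weight_module :=
  [/\
      (forall v, exists (k : nat) (ms : nat -> R -> Prop) (vs : nat -> M),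
         (forall i, (i < k)%N -> maximal_ideal (ms i) /\ wt (ms i) (vs i)) /\
         v = \sum_(i < k) vs i),
      (forall (k : nat) (ms : nat -> R -> Prop) (vs : nat -> M),
         (forall i, (i < k)%N -> maximal_ideal (ms i) /\ wt (ms i) (vs i)) ->
         (forall i j, (i < k)%N -> (j < k)%N -> seteq (ms i) (ms j) -> i = j) ->
         \sum_(i < k) vs i = 0 -> forall i, (i < k)%N -> vs i = 0) &
      (* each M_m is finite-dimensional over R/m *)
      (forall m, maximal_ideal m -> exists (k : nat) (e : nat -> M),
         (forall i, (i < k)%N -> wt m (e i)) /\
         forall v, wt m v -> exists c : nat -> R, v = \sum_(i < k) rho 0 (c i) (e i))].

Definition in_supp (m : R -> Prop) := maximal_ideal m /\ exists v, wt m v /\ v != 0.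

Definition J_break (m : R -> Prop) :=
  exists j v, J j /\ wt m v /\ rho 1 j v != 0.

(* m is an H-break for M : (sigma^-1(h) t^-1) w <> 0 with w in M_{sigma(m)} *)
Definition H_break (m : R -> Prop) :=
  exists h w, H h /\ wt (simg 1 m) w /\ rho (-1) (si h) w != 0.

End BR.

(* Main.v *)
Require Import Defs.
From HB Require Import structures.
From mathcomp Require Import all_boot all_order all_algebra.
From mathcomp Require Import zify ring.
From Stdlib Require Import Classical.
Import GRing.Theory.
Local Open Scope ring_scope.

Section Gen.
Variable R : comNzRingType.
Implicit Types (p q I K : R -> Prop).

Definition rmor (f : R -> R) :=
  [/\ f 0 = 0, f 1 = 1, forall x y, f (x + y) = f x + f y & forall x y, f (x*y) = f x * f y].

Lemma rmor_iter f k : rmor f -> rmor (iter k f).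
Proof.
case=> f0 f1 fD fM; elim: k => [|k [g0 g1 gD gM]] //=.
split; first by rewrite iterS g0 f0.
- by rewrite iterS g1 f1.
- by move=> x y; rewrite !iterS gD fD.
- by move=> x y; rewrite !iterS gM fM.
Qed.

Lemma iter_cancel (f g : R -> R) k : cancel f g -> cancel (iter k f) (iter k g).
Proof.
move=> fK x; elim: k => // k IH.
by rewrite iterSr iterS fK.
Qed.

Lemma ideal_neg I x : is_ideal I -> I x -> I (- x).
Proof. by case=> _ _ IM Ix; rewrite -mulN1r; apply: IM. Qed.

Lemma ideal_seteq I I' : seteq I I' -> is_ideal I -> is_ideal I'.
Proof.
move=> E [I0 ID IM]; split.
- by apply/E.
- by move=> x y /E Ix /E Iy; apply/E; apply: ID.
- by move=> r x /E Ix; apply/E; apply: IM.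
Qed.

Lemma max_seteq I I' : seteq I I' -> maximal_ideal I -> maximal_ideal I'.
Proof.
move=> E [Ii I1 Imax]; split.
- exact: ideal_seteq Ii.
- by move/E.
- move=> K Ki sub; have [E2|K1] := Imax K Ki (fun x Ix => sub x (proj1 (E x) Ix)).
  + by left=> x; rewrite E2 E.
  + by right.
Qed.

Lemma comax p q : maximal_ideal p -> maximal_ideal q -> ~ seteq p q ->
  exists a b, p a /\ q b /\ a + b = 1.
Proof.
move=> [[p0 pD pM] p1 pmax] [[q0 qD qM] q1 qmax] npq.
pose K := fun x => exists a b, p a /\ q b /\ x = a + b.
have Ki : is_ideal K.
  split.
  - by exists 0, 0; rewrite addr0.
  - move=> x y [a [b [pa [qb ->]]]] [a' [b' [pa' [qb' ->]]]].
    exists (a + a'), (b + b'); split; [exact: pD|split; [exact: qD|]].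
    by rewrite addrACA.
  - move=> r x [a [b [pa [qb ->]]]]; exists (r * a), (r * b).
    by split; [exact: pM|split; [exact: qM|rewrite mulrDr]].
have pK : subset_of p K by move=> x px; exists x, 0; rewrite addr0.
have [E|[a [b [pa [qb e]]]]] := pmax K Ki pK; last by exists a, b.
have qp : subset_of q p by move=> x qx; apply/E; exists 0, x; rewrite add0r.
have [E2|] := qmax p (And3 p0 pD pM) qp; first by case: npq.
by [].
Qed.

Lemma max_pre (phi psi : R -> R) I : rmor phi -> rmor psi ->
  cancel phi psi -> cancel psi phi -> maximal_ideal I ->
  maximal_ideal (fun x => I (phi x)).
Proof.
move=> [f0 f1 fD fM] [g0 g1 gD gM] fK gK [[I0 ID IM] I1 Imax]; split.
- split; first by rewrite f0.
  + by move=> x y Ix Iy; rewrite fD; apply: ID.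
  + by move=> r x Ix; rewrite fM; apply: IM.
- by rewrite f1.
- move=> K [K0 KD KM] sub.
  have K'i : is_ideal (fun x => K (psi x)).
    split; first by rewrite g0.
    + by move=> x y Kx Ky; rewrite gD; apply: KD.
    + by move=> r x Kx; rewrite gM; apply: KM.
  have sub' : subset_of I (fun x => K (psi x)).
    by move=> x Ix; apply: sub; rewrite gK.
  have [E|K1] := Imax _ K'i sub'; last by right; rewrite g1 in K1.
  by left=> x; rewrite -E fK.
Qed.

End Gen.
Arguments comax {R p q}. Arguments ideal_neg {R I x}. Arguments max_seteq {R I I'}. Arguments ideal_seteq {R I I'}. Arguments max_pre {R phi psi I}.

Section Mod.
Variable R : comNzRingType.
Variables (s si : R -> R) (H J : R -> Prop).
Variables (M : zmodType) (rho : int -> R -> M -> M).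
Hypothesis Mmod : is_BR_module s si H J rho.
Hypothesis s_si : cancel s si.
Hypothesis si_s : cancel si s.
Hypothesis HH : is_ideal H.
Hypothesis HJ : is_ideal J.
Hypothesis s0 : s 0 = 0.

Notation Iz := (Iz s si H J).

Lemma Iz0 a : Iz 0 a. Proof. by []. Qed.

Lemma rho_v0 z a : Iz z a -> rho z a 0 = 0.
Proof.
case: Mmod => addv _ _ _ Ia; have E := addv z a 0 0 Ia; rewrite addr0 in E.
by apply: (addrI (rho z a 0)); rewrite addr0 -E.
Qed.

Lemma rho_vD z a v w : Iz z a -> rho z a (v + w) = rho z a v + rho z a w.
Proof. by case: Mmod => addv _ _ _ Ia; apply: addv. Qed.

Lemma rho_aD z a b v : Iz z a -> Iz z b -> rho z (a + b) v = rho z a v + rho z b v.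
Proof. by case: Mmod => _ adda _ _; apply: adda. Qed.

Lemma rho0_0 v : rho 0 0 v = 0.
Proof.
have E := rho_aD 0 0 0 v (Iz0 0) (Iz0 0); rewrite addr0 in E.
by apply: (addrI (rho 0 0 v)); rewrite addr0 -E.
Qed.

Lemma rho0_1 v : rho 0 1 v = v.
Proof. by case: Mmod. Qed.

Lemma rho_comp a b z1 z2 v : Iz z1 a -> Iz z2 b ->
  rho z1 a (rho z2 b v) = rho (z1 + z2) (a * spow s si z1 b) v.
Proof. by case: Mmod => _ _ _ c; apply: c. Qed.

Lemma rho0M a b v : rho 0 a (rho 0 b v) = rho 0 (a * b) v.
Proof. by rewrite rho_comp // addr0. Qed.

Lemma rho0_e r z a u : Iz z a -> rho 0 r (rho z a u) = rho z (r * a) u.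
Proof. by move=> Ia; rewrite rho_comp // add0r. Qed.

Lemma rho_e0 r z a u : Iz z a -> rho z a (rho 0 r u) = rho z (a * spow s si z r) u.
Proof. by move=> Ia; rewrite rho_comp // addr0. Qed.

Lemma rho0N v : rho 0 (-1) v = - v.
Proof.
have E := rho_aD 0 1 (-1) v (Iz0 1) (Iz0 (-1)); rewrite subrr rho0_0 rho0_1 in E.
by apply: (addrI v); rewrite subrr E.
Qed.

Lemma rho0_vD r v w : rho 0 r (v + w) = rho 0 r v + rho 0 r w.
Proof. exact: rho_vD (Iz0 r). Qed.

Lemma idealprod1 (A B : R -> Prop) x y : A x -> B y -> idealprod A B (x * y).
Proof.
move=> Ax By; exists 1%N, (fun _ => x), (fun _ => y); split.
  by move=> i; rewrite ltnS leqn0 => _.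
by rewrite big_ord1.
Qed.

Lemma idealprod_pre (A B : R -> Prop) k (a b : nat -> R) K :
  (forall i, (i < k)%N -> A (a i) /\ B (b i)) -> (K <= k)%N ->
  idealprod A B (\sum_(i < K) a i * b i).
Proof.
move=> AB Kk; exists K, a, b; split => // i iK; apply: AB.
exact: leq_trans iK Kk.
Qed.

Section Gen.
Variable S : M -> Prop.
Hypothesis S0 : S 0.
Hypothesis SD : forall v w, S v -> S w -> S (v + w).
Hypothesis S_R : forall r v, S v -> S (rho 0 r v).
Hypothesis S_X : forall j v, J j -> S v -> S (rho 1 j v).
Hypothesis S_Y : forall y v, H (s y) -> S v -> S (rho (-1) y v).

Lemma S_sum z (A B : R -> Prop) k (a b : nat -> R) v :
  (forall i, (i < k)%N -> A (a i) /\ B (b i)) ->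
  (forall K, (K <= k)%N -> Iz z (\sum_(i < K) a i * b i)) ->
  (forall i, (i < k)%N -> Iz z (a i * b i) /\ S (rho z (a i * b i) v)) ->
  S (rho z (\sum_(i < k) a i * b i) v).
Proof.
move=> AB Ipre Iterm.
suff: forall K, (K <= k)%N -> S (rho z (\sum_(i < K) a i * b i) v) by apply.
elim=> [|K IH] Kk.
  rewrite big_ord0.
  have E := rho_aD z _ _ v (Ipre 0%N isT) (Ipre 0%N isT).
  rewrite big_ord0 addr0 in E.
  have -> : rho z 0 v = 0 by apply: (addrI (rho z 0 v)); rewrite addr0 -E.
  exact: S0.
rewrite big_ord_recr /=.
have [It St] := Iterm K Kk.
have IK : Iz z (\sum_(i < K) a i * b i) by apply: Ipre; apply: ltnW.
rewrite rho_aD //; apply: SD => //; apply: IH; exact: ltnW.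
Qed.

Lemma stepgen z a v : Iz z a -> S v -> S (rho z a v).
Proof.
case: z => [k|k].
  case: k => [|k]; first by move=> _; apply: S_R.
  elim: k a v => [|k IH] a v; first exact: S_X.
  move=> [K [x [y [xy ->]]]] Sv.
  apply: (S_sum _ (Ipos si J k.+1) (fun x => J (iter k.+1 si x))) => //.
    by move=> K' K'k; apply: idealprod_pre K'k.
  move=> i ik; have [xi yi] := xy i ik; split; first exact: idealprod1.
  have -> : x i * y i = x i * spow s si k.+1%:Z (iter k.+1 si (y i)).
    by rewrite /spow iter_cancel.
  have e2 : Posz k.+2 = (k.+1%:Z + 1)%R by lia. 
  rewrite e2.
  rewrite -rho_comp //; apply: IH => //; exact: S_X.
elim: k a v => [|k IH] a v; first exact: S_Y.
move=> [K [x [y [xy ->]]]] Sv.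
apply: (S_sum _ (Ineg s H k.+1) (fun x => H (iter k.+2 s x))) => //.
  by move=> K' K'k; apply: idealprod_pre K'k.
move=> i ik; have [xi yi] := xy i ik; split; first exact: idealprod1.
have -> : x i * y i = x i * spow s si (Negz k) (iter k.+1 s (y i)).
  by rewrite /spow iter_cancel.
have -> : Negz k.+1 = (Negz k + (-1))%R by rewrite !NegzE; lia.
rewrite -rho_comp //; apply: IH => //; exact: S_Y.
Qed.

End Gen.
End Mod.

Section Chain.
Variable R : comNzRingType.
Variables (s si : R -> R) (H J : R -> Prop).
Variables (M : zmodType) (rho : int -> R -> M -> M).
Hypothesis Msimple : simple_module s si H J rho.
Hypothesis r0D : forall a b v, rho 0 (a + b) v = rho 0 a v + rho 0 b v.
Hypothesis r01 : forall v, rho 0 1 v = v.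
Hypothesis r0M : forall a b v, rho 0 a (rho 0 b v) = rho 0 (a * b) v.
Hypothesis r0vD : forall r v w, rho 0 r (v + w) = rho 0 r v + rho 0 r w.
Hypothesis r0v0 : forall r, rho 0 r 0 = 0.
Hypothesis r0N : forall v, rho 0 (-1) v = - v.

Variables (D D' : R -> Prop) (Z Z' : R -> M -> M) (base : R -> Prop).
Variable shift : (R -> Prop) -> (R -> Prop).
Hypothesis gen : forall S : M -> Prop, S 0 -> (forall v w, S v -> S w -> S (v + w)) ->
  (forall r v, S v -> S (rho 0 r v)) -> (forall j v, D j -> S v -> S (Z j v)) ->
  (forall h v, D' h -> S v -> S (Z' h v)) ->
  forall z a v, Iz s si H J z a -> S v -> S (rho z a v).
Hypothesis Z0 : forall j, D j -> Z j 0 = 0.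
Hypothesis ZD : forall j u w, D j -> Z j (u + w) = Z j u + Z j w.
Hypothesis Z'0 : forall j, D' j -> Z' j 0 = 0.
Hypothesis Z'D : forall j u w, D' j -> Z' j (u + w) = Z' j u + Z' j w.
Hypothesis Rabs : forall r j u, D j -> exists2 j', D j' & rho 0 r (Z j u) = Z j' u.
Hypothesis ret : forall h j u, D' h -> D j -> exists2 c, base c & Z' h (Z j u) = rho 0 c u.
Hypothesis base_max : maximal_ideal base.
Hypothesis shift_max : forall p, maximal_ideal p -> maximal_ideal (shift p).
Hypothesis wtZ : forall p j u, D j -> wt rho p u -> wt rho (shift p) (Z j u).
Hypothesis wtZ' : forall p h u, D' h -> wt rho (shift p) u -> wt rho p (Z' h u).

Inductive chain : nat -> M -> Prop :=
| ch1 j v : D j -> wt rho base v -> chain 1 (Z j v)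
| chS k j u : D j -> chain k u -> chain k.+1 (Z j u).

Lemma chain_wt k u : chain k u -> wt rho (iter k shift base) u.
Proof.
elim=> [j v Dj wv | k' j u' Dj _ IH]; first exact: wtZ.
rewrite iterS; exact: wtZ.
Qed.

Lemma iter_shift_max k : maximal_ideal (iter k shift base).
Proof. by elim: k => //= k IH; apply: shift_max. Qed.

Lemma chain_gt0 k u : chain k u -> (0 < k)%N.
Proof. by case. Qed.

Lemma chainR r k u : chain k u -> chain k (rho 0 r u).
Proof.
case=> [j v Dj wv | k' j u' Dj cu].
  have [j' Dj' ->] := Rabs r j v Dj; exact: ch1.
have [j' Dj' ->] := Rabs r j u' Dj; exact: chS.
Qed.

Inductive span : M -> Prop :=
| sp0 : span 0
| spC k u : chain k u -> span u
| spD u w : span u -> span w -> span (u + w).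
Arguments spC {k u}. Arguments chS {k j u}. Arguments ch1 {j v}. Arguments spD {u w}.

Lemma span_R r u : span u -> span (rho 0 r u).
Proof.
elim=> [|k u' c|u' w _ IH1 _ IH2].
- rewrite r0v0; exact: sp0.
- exact: spC (chainR r _ _ c).
- rewrite r0vD; exact: spD.
Qed.

Lemma span_Z j u : D j -> span u -> span (Z j u).
Proof.
move=> Dj; elim=> [|k u' c|u' w _ IH1 _ IH2].
- rewrite Z0 //; exact: sp0.
- exact: spC (chS Dj c).
- rewrite ZD //; exact: spD.
Qed.

Lemma span_Z' h u : D' h -> span u -> span (Z' h u).
Proof.
move=> Dh; elim=> [|k u' c|u' w _ IH1 _ IH2].
- rewrite Z'0 //; exact: sp0.
- case: c => [j v Dj wv | k' j u'' Dj cu].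
    have [c Bc ->] := ret h j v Dh Dj; rewrite wv //; exact: sp0.
  have [c Bc ->] := ret h j u'' Dh Dj; exact: spC (chainR c _ _ cu).
- rewrite Z'D //; exact: spD.
Qed.

Lemma span_sub : submodule s si H J rho span.
Proof.
split.
- exact: sp0.
- move=> v w; exact: spD.
- by move=> v Sv; rewrite -r0N; apply: span_R.
- apply: gen; [exact: sp0 | move=> v w; exact: spD | exact: span_R |
    exact: span_Z | exact: span_Z'].
Qed.

Lemma span_all : (exists j v, D j /\ wt rho base v /\ Z j v != 0) -> forall v, span v.
Proof.
move=> [j [v [Dj [wv nz]]]].
case: Msimple => _ /(_ span span_sub) [allz|//].
by have := allz _ (spC (ch1 Dj wv)); move/eqP: nz.
Qed.

Lemma kill p x e : is_ideal p -> wt rho p x -> p (e - 1) -> rho 0 e x = 0 -> x = 0.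
Proof.
move=> pI wx pe ex.
have pe' : p (- (e - 1)) by apply: ideal_neg.
by rewrite -(r01 x) -(subrK e 1) addrC -opprB r0D ex (wx _ pe') addr0.
Qed.

Lemma comax_step p u : maximal_ideal p -> wt rho p u ->
  exists e, base (e - 1) /\ (~ seteq p base -> rho 0 e u = 0).
Proof.
move=> pm wu.
case: (classic (seteq p base)) => E.
  exists 1; rewrite subrr; split; first by case: base_max => [[]].
  by [].
have [a [b [ba [pb ab]]]] := comax base_max pm (fun E' => E (fun x => iff_sym (E' x))).
exists b; split.
  have -> : b - 1 = - a by rewrite -ab; ring.
  by apply: ideal_neg => //; case: base_max.
by move=> _; rewrite wu.
Qed.

Lemma P_add (f : M -> M) (fD : forall u w, f (u + w) = f u + f w) u w :
  (exists e, base (e - 1) /\ rho 0 e (f u) = 0) ->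
  (exists e, base (e - 1) /\ rho 0 e (f w) = 0) ->
  (exists e, base (e - 1) /\ rho 0 e (f (u + w)) = 0).
Proof.
move=> [e1 [b1 z1]] [e2 [b2 z2]]; exists (e1 * e2); split.
  have -> : e1 * e2 - 1 = e1 * (e2 - 1) + (e1 - 1) by ring.
  by case: base_max => [[_ bD bM] _ _]; apply: bD => //; apply: bM.
rewrite fD r0vD.
have -> : rho 0 (e1 * e2) (f u) = 0 by rewrite mulrC -r0M z1 r0v0.
by rewrite -r0M z2 r0v0 addr0.
Qed.

Lemma G1 : (exists j v, D j /\ wt rho base v /\ Z j v != 0) ->
  forall h w, D' h -> wt rho (shift base) w -> Z' h w = 0.
Proof.
move=> nz h w Dh ww.
have bI : is_ideal base by case: base_max.
have P : forall u, span u -> exists e, base (e - 1) /\ rho 0 e (Z' h u) = 0.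
  move=> u0; elim=> [|k u c|u w' _ IH1 _ IH2].
  - exists 1; rewrite subrr Z'0 // r0v0; split => //; by case: bI.
  - have aux : forall p u' j, maximal_ideal p -> wt rho p u' -> D j ->
        exists e, base (e - 1) /\ rho 0 e (Z' h (Z j u')) = 0.
      move=> p u' j pm wu Dj; have [c' Bc ->] := ret h j u' Dh Dj.
      have [e [Be He]] := comax_step _ _ pm wu.
      case: (classic (seteq p base)) => E.
        exists 1; rewrite subrr r01; split; first by case: bI.
        by apply: wu; apply/E.
      exists e; split => //; rewrite r0M mulrC -r0M He ?r0v0 //.
    case: c => [j v Dj wv | k' j u'' Dj cu].
      exact: aux _ _ _ base_max wv Dj.
    exact: aux _ _ _ (iter_shift_max k') (chain_wt _ _ cu) Dj.
  - exact: P_add _ (fun a b => Z'D h a b Dh) _ _ IH1 IH2.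
have [e [Be He]] := P w (span_all nz w).
exact: kill _ _ _ bI (wtZ' _ _ _ Dh ww) Be He.
Qed.

Lemma G2 L : (exists j v, D j /\ wt rho base v /\ Z j v != 0) ->
  (forall k, (0 < k)%N -> (k <= L)%N -> ~ seteq (iter k shift base) base) ->
  (forall u, chain L.+1 u -> u = 0) ->
  forall v, wt rho base v -> v = 0.
Proof.
move=> nz dist hL v wv.
have bI : is_ideal base by case: base_max.
have big : forall k u, chain k u -> (L < k)%N -> u = 0.
  move=> k u; elim=> [j v' Dj wv' | k' j u' Dj cu IH] Lk.
    have L0 : L = 0%N by move: Lk; rewrite ltnS leqn0 => /eqP.
    by apply: hL; rewrite L0; exact: ch1.
  case: (ltnP L k') => Lk'.
    by rewrite IH // Z0.
  have eL : k' = L by apply/eqP; rewrite eqn_leq Lk' -ltnS Lk.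
  by apply: hL; rewrite -eL; exact: chS.
have P : forall u, span u -> exists e, base (e - 1) /\ rho 0 (e) (id u) = 0.
  move=> u0; elim=> [|k u c|u w' _ IH1 _ IH2].
  - exists 1; rewrite subrr r0v0; split => //; by case: bI.
  - case: (ltnP L k) => Lk.
      exists 1; rewrite subrr (big _ _ c Lk) r0v0; split => //; by case: bI.
    have [e [Be He]] := comax_step _ _ (iter_shift_max k) (chain_wt _ _ c).
    exists e; split => //; apply: He; apply: dist => //; exact: chain_gt0 _ _ c.
  - exact: (P_add id (fun _ _ => erefl) u w' IH1 IH2).
have [e [Be He]] := P v (span_all nz v).
exact: kill _ _ _ bI wv Be He.
Qed.

Lemma G2a L : (exists j v, D j /\ wt rho base v /\ Z j v != 0) ->
  (forall k, (0 < k)%N -> (k <= L)%N -> ~ seteq (iter k shift base) base) ->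
  (forall j u, D j -> wt rho (iter L shift base) u -> Z j u = 0) ->
  forall v, wt rho base v -> v = 0.
Proof.
move=> nz dist hk; apply: (G2 L nz dist) => u c.
move: c; move e: L.+1 => k c; case: c e => [j v Dj wv | k' j u' Dj cu] e.
  have L0 : L = 0%N by case: e.
  by apply: hk => //; rewrite L0.
have eL : k' = L by case: e.
by apply: hk => //; rewrite -eL; apply: chain_wt cu.
Qed.

Lemma G2b L : (exists j v, D j /\ wt rho base v /\ Z j v != 0) ->
  (forall k, (0 < k)%N -> (k <= L)%N -> ~ seteq (iter k shift base) base) ->
  (forall u, wt rho (iter L.+1 shift base) u -> u = 0) ->
  forall v, wt rho base v -> v = 0.
Proof.
move=> nz dist hk; apply: (G2 L nz dist) => u c.
by apply: hk; apply: chain_wt c.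
Qed.

End Chain.

Arguments rmor {R}. Arguments rmor_iter {R}. Arguments iter_cancel {R}.
Arguments rho_v0 {R s si H J M rho}. Arguments rho_vD {R s si H J M rho}.
Arguments rho_aD {R s si H J M rho}. Arguments rho0_0 {R s si H J M rho}.
Arguments rho0_1 {R s si H J M rho}. Arguments rho_comp {R s si H J M rho}.
Arguments rho0M {R s si H J M rho}. Arguments rho0_e {R s si H J M rho}.
Arguments rho_e0 {R s si H J M rho}. Arguments rho0N {R s si H J M rho}.
Arguments rho0_vD {R s si H J M rho}. Arguments stepgen {R s si H J M rho}.
Arguments idealprod1 {R A B x y}.
Arguments G1 {R s si H J M rho}. Arguments G2a {R s si H J M rho}. Arguments G2b {R s si H J M rho}.
Arguments chain_wt {R M rho D Z base shift}.

Section Inst.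
Variable R : comNzRingType.
Variables (s si : R -> R) (H J : R -> Prop).
Hypothesis s_si : cancel s si.
Hypothesis si_s : cancel si s.
Hypothesis s_rm : rmor s.
Hypothesis HH : is_ideal H.
Hypothesis HJ : is_ideal J.
Variables (M : zmodType) (rho : int -> R -> M -> M).
Hypothesis Mmod : is_BR_module s si H J rho.
Hypothesis Msimple : simple_module s si H J rho.
Variable m : R -> Prop.
Hypothesis mbreak : is_break s si H J m.

Lemma si_rm : rmor si.
Proof.
case: s_rm => s0 s1 sD sM; split.
- by rewrite -{1}s0 s_si.
- by rewrite -{1}s1 s_si.
- by move=> x y; apply: (can_inj s_si); rewrite sD !si_s.
- by move=> x y; apply: (can_inj s_si); rewrite sM !si_s.
Qed.

Let Iz0 a : Iz s si H J 0 a. Proof. by []. Qed.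
Let r0D a b v : rho 0 (a + b) v = rho 0 a v + rho 0 b v.
Proof. exact: (rho_aD Mmod 0 a b v (Iz0 a) (Iz0 b)). Qed.
Let r01 v : rho 0 1 v = v. Proof. exact: (rho0_1 Mmod v). Qed.
Let r0M a b v : rho 0 a (rho 0 b v) = rho 0 (a * b) v. Proof. exact: (rho0M Mmod a b v). Qed.
Let r0vD r v w : rho 0 r (v + w) = rho 0 r v + rho 0 r w. Proof. exact: (rho0_vD Mmod r v w). Qed.
Let r0v0 r : rho 0 r 0 = 0. Proof. exact: (rho_v0 Mmod 0 r (Iz0 r)). Qed.
Let r0N v : rho 0 (-1) v = - v. Proof. exact: (rho0N Mmod v). Qed.

Let fwd (p : R -> Prop) := fun x => p (si x).
Let bwd (p : R -> Prop) := fun x => p (s x).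

Lemma m_max : maximal_ideal m. Proof. by case: mbreak. Qed.

Lemma brk h j : H h -> J j -> m (si h * si j).
Proof.
move=> Hh Jj; case: mbreak => _ [_ sub].
have := sub _ (idealprod1 Hh Jj).
by case: si_rm => _ _ _ siM; rewrite /simg /= siM.
Qed.

Lemma fwd_max p : maximal_ideal p -> maximal_ideal (fwd p).
Proof. by apply: max_pre; [exact: si_rm | exact: s_rm | exact: si_s | exact: s_si]. Qed.
Lemma bwd_max p : maximal_ideal p -> maximal_ideal (bwd p).
Proof. by apply: max_pre; [exact: s_rm | exact: si_rm | exact: s_si | exact: si_s]. Qed.

Let JX j : J j -> Iz s si H J 1 j. Proof. by []. Qed.
Let HY y : H (s y) -> Iz s si H J (-1) y. Proof. by []. Qed.


Let JM : forall r x, J x -> J (r * x). Proof. by case: HJ. Qed.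
Let HM : forall r x, H x -> H (r * x). Proof. by case: HH. Qed.

Lemma fwd_gen : forall S : M -> Prop, S 0 -> (forall v w, S v -> S w -> S (v + w)) ->
  (forall r v, S v -> S (rho 0 r v)) -> (forall j v, J j -> S v -> S (rho 1 j v)) ->
  (forall h v, H (s h) -> S v -> S (rho (-1) h v)) ->
  forall z a v, Iz s si H J z a -> S v -> S (rho z a v).
Proof. move=> S S0 SD SR SX SY; exact: (stepgen Mmod s_si si_s S S0 SD SR SX SY). Qed.
Lemma bwd_gen : forall S : M -> Prop, S 0 -> (forall v w, S v -> S w -> S (v + w)) ->
  (forall r v, S v -> S (rho 0 r v)) -> (forall h v, H (s h) -> S v -> S (rho (-1) h v)) ->
  (forall j v, J j -> S v -> S (rho 1 j v)) ->
  forall z a v, Iz s si H J z a -> S v -> S (rho z a v).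
Proof. move=> S S0 SD SR SY SX; exact: (stepgen Mmod s_si si_s S S0 SD SR SX SY). Qed.

Lemma X0 : forall j, J j -> rho 1 j 0 = 0.
Proof. move=> j Jj; exact: (rho_v0 Mmod 1 j (JX j Jj)). Qed.
Lemma XD : forall j u w, J j -> rho 1 j (u + w) = rho 1 j u + rho 1 j w.
Proof. move=> j u w Jj; exact: (rho_vD Mmod 1 j u w (JX j Jj)). Qed.
Lemma Y0 : forall j, H (s j) -> rho (-1) j 0 = 0.
Proof. move=> j Jj; exact: (rho_v0 Mmod (-1) j (HY j Jj)). Qed.
Lemma YD : forall j u w, H (s j) -> rho (-1) j (u + w) = rho (-1) j u + rho (-1) j w.
Proof. move=> j u w Jj; exact: (rho_vD Mmod (-1) j u w (HY j Jj)). Qed.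

Lemma fwd_Rabs : forall r j u, J j -> exists2 j', J j' & rho 0 r (rho 1 j u) = rho 1 j' u.
Proof. by move=> r j u Jj; exists (r * j); [apply: JM | apply: (rho0_e Mmod r 1 j u (JX j Jj))]. Qed.
Lemma bwd_Rabs : forall r j u, H (s j) -> exists2 j', H (s j') & rho 0 r (rho (-1) j u) = rho (-1) j' u.
Proof.
move=> r j u Jj; exists (r * j); last by apply: (rho0_e Mmod r (-1) j u (HY j Jj)).
by case: s_rm => _ _ _ sM; rewrite sM; apply: HM.
Qed.

Lemma fwd_ret : forall h j u, H (s h) -> J j -> exists2 c, m c & rho (-1) h (rho 1 j u) = rho 0 c u.
Proof.
move=> h' j u Hh' Jj; exists (h' * si j).
  by have := brk (s h') j Hh' Jj; rewrite s_si.
by rewrite (rho_comp Mmod) //.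
Qed.
Lemma bwd_ret : forall j h u, J j -> H (s h) -> exists2 c, fwd m c & rho 1 j (rho (-1) h u) = rho 0 c u.
Proof.
move=> j h' u Jj Hh'; exists (j * s h').
  have := brk (s h') j Hh' Jj; rewrite s_si /fwd.
  by case: si_rm => _ _ _ siM; rewrite siM s_si mulrC.
by rewrite (rho_comp Mmod) // addrN.
Qed.

Lemma fwd_wtZ : forall p j u, J j -> wt rho p u -> wt rho (fwd p) (rho 1 j u).
Proof.
move=> p j u Jj wu r pr.
rewrite (rho0_e Mmod) // mulrC.
have -> : r = s (si r) by rewrite si_s.
by rewrite -(rho_e0 Mmod) // (wu _ pr) (rho_v0 Mmod).
Qed.
Lemma fwd_wtZ' : forall p h u, H (s h) -> wt rho (fwd p) u -> wt rho p (rho (-1) h u).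
Proof.
move=> p h' u Hh' wu r pr.
rewrite (rho0_e Mmod) // mulrC.
have -> : r = si (s r) by rewrite s_si.
rewrite -[si (s r)]/(spow s si (-1) (s r)) -(rho_e0 Mmod) //.
by rewrite (wu (s r)) ?(rho_v0 Mmod) // /fwd s_si.
Qed.
Lemma bwd_wtZ : forall p h u, H (s h) -> wt rho p u -> wt rho (bwd p) (rho (-1) h u).
Proof.
move=> p h' u Hh' wu r pr.
rewrite (rho0_e Mmod) // mulrC.
have -> : r = si (s r) by rewrite s_si.
rewrite -[si (s r)]/(spow s si (-1) (s r)) -(rho_e0 Mmod) //.
by rewrite (wu (s r)) ?(rho_v0 Mmod) //.
Qed.
Lemma bwd_wtZ' : forall p j u, J j -> wt rho (bwd p) u -> wt rho p (rho 1 j u).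
Proof.
move=> p j u Jj wu r pr.
rewrite (rho0_e Mmod) // mulrC.
have -> : r = s (si r) by rewrite si_s.
by rewrite -(rho_e0 Mmod) // (wu (si r)) ?(rho_v0 Mmod) // /bwd si_s.
Qed.

Lemma fwd_G1 : J_break J rho m -> ~ H_break s si H rho m.
Proof.
move=> nz [h [w [Hh [ww nzw]]]].
have := G1 Msimple r0D r01 r0M r0vD r0v0 r0N J (fun y => H (s y)) (rho 1) (rho (-1)) m fwd
  fwd_gen X0 XD Y0 YD fwd_Rabs fwd_ret m_max fwd_max fwd_wtZ fwd_wtZ' nz (si h) w.
by rewrite si_s => /(_ Hh ww) E; move/eqP: nzw.
Qed.

Lemma fwd_G2a L : J_break J rho m ->
  (forall k, (0 < k)%N -> (k <= L)%N -> ~ seteq (iter k fwd m) m) ->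
  (forall j u, J j -> wt rho (iter L fwd m) u -> rho 1 j u = 0) ->
  forall v, wt rho m v -> v = 0.
Proof.
exact: (G2a Msimple r0D r01 r0M r0vD r0v0 r0N J (fun y => H (s y)) (rho 1) (rho (-1)) m fwd
  fwd_gen X0 XD Y0 YD fwd_Rabs fwd_ret m_max fwd_max fwd_wtZ L).
Qed.
Lemma fwd_G2b L : J_break J rho m ->
  (forall k, (0 < k)%N -> (k <= L)%N -> ~ seteq (iter k fwd m) m) ->
  (forall u, wt rho (iter L.+1 fwd m) u -> u = 0) ->
  forall v, wt rho m v -> v = 0.
Proof.
exact: (G2b Msimple r0D r01 r0M r0vD r0v0 r0N J (fun y => H (s y)) (rho 1) (rho (-1)) m fwd
  fwd_gen X0 XD Y0 YD fwd_Rabs fwd_ret m_max fwd_max fwd_wtZ L).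
Qed.

Lemma Hnz : H_break s si H rho m ->
  exists j v, H (s j) /\ wt rho (fwd m) v /\ rho (-1) j v != 0.
Proof. by move=> [h [w [Hh [ww nzw]]]]; exists (si h), w; rewrite si_s. Qed.

Lemma bwd_G2a L : H_break s si H rho m ->
  (forall k, (0 < k)%N -> (k <= L)%N -> ~ seteq (iter k bwd (fwd m)) (fwd m)) ->
  (forall j u, H (s j) -> wt rho (iter L bwd (fwd m)) u -> rho (-1) j u = 0) ->
  forall v, wt rho (fwd m) v -> v = 0.
Proof.
move=> /Hnz nz.
exact: (G2a Msimple r0D r01 r0M r0vD r0v0 r0N (fun y => H (s y)) J (rho (-1)) (rho 1) (fwd m) bwd
  bwd_gen Y0 YD X0 XD bwd_Rabs bwd_ret (fwd_max _ m_max) bwd_max bwd_wtZ L nz).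
Qed.
Lemma bwd_G2b L : H_break s si H rho m ->
  (forall k, (0 < k)%N -> (k <= L)%N -> ~ seteq (iter k bwd (fwd m)) (fwd m)) ->
  (forall u, wt rho (iter L.+1 bwd (fwd m)) u -> u = 0) ->
  forall v, wt rho (fwd m) v -> v = 0.
Proof.
move=> /Hnz nz.
exact: (G2b Msimple r0D r01 r0M r0vD r0v0 r0N (fun y => H (s y)) J (rho (-1)) (rho 1) (fwd m) bwd
  bwd_gen Y0 YD X0 XD bwd_Rabs bwd_ret (fwd_max _ m_max) bwd_max bwd_wtZ L nz).
Qed.

End Inst.

Section Orb.
Local Open Scope nat_scope.
Variable R : comNzRingType.
Variables (s si : R -> R).
Hypothesis s_si : cancel s si.
Hypothesis si_s : cancel si s.
Variable n : nat.
Hypothesis n_gt0 : (0 < n)%N.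
Hypothesis sn : forall x, iter n s x = x.

Lemma iter_mod (f : R -> R) : (forall x, iter n f x = x) ->
  forall N x, iter N f x = iter (N %% n) f x.
Proof.
move=> fn N x; rewrite {1}(divn_eq N n) iterD.
suff P : forall q y, iter (q * n) f y = y by rewrite P.
elim=> [|q IH] y; first by rewrite mul0n.
by rewrite mulSn iterD IH fn.
Qed.

Lemma sin x : iter n si x = x.
Proof.
have := sn (iter n si x); rewrite (iter_cancel si s n si_s) => <-.
by [].
Qed.

Lemma s_as_si x : s x = iter n.-1 si x.
Proof.
have := sin (s x); case: n n_gt0 => // n' _; rewrite iterSr s_si /= => ->.
by [].
Qed.

Lemma its_si k x : iter k s x = iter (k * n.-1) si x.
Proof.
elim: k x => [|k IH] x; first by rewrite mul0n.
by rewrite iterS s_as_si IH mulSn iterD.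
Qed.

Lemma spow_rep z : exists2 r, (r < n)%N & forall x, spow s si z x = iter r si x.
Proof.
case: z => [k|k].
  exists ((k * n.-1) %% n); first by rewrite ltn_mod.
  by move=> x; rewrite /spow its_si (iter_mod _ sin).
exists (k.+1 %% n); first by rewrite ltn_mod.
by move=> x; rewrite /spow (iter_mod _ sin).
Qed.

Lemma simg_nat (i : nat) (I : R -> Prop) x : simg s si i I x = I (iter i si x).
Proof. by case: i. Qed.

Lemma orbit_rep m0 p : in_sorbit s si m0 p ->
  exists2 r, (r < n)%N & forall x, p x <-> m0 (iter r si x).
Proof.
move=> [z E]; have [r rn Er] := spow_rep (- z).
by exists r => // x; rewrite (E x) /simg Er.
Qed.

Lemma rel_rep (m0 p q : R -> Prop) r r' : (r < n)%N -> (r' < n)%N ->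
  (forall x, p x <-> m0 (iter r si x)) -> (forall x, q x <-> m0 (iter r' si x)) ->
  exists2 K, (K < n)%N & forall x, q x <-> p (iter K si x).
Proof.
move=> rn r'n Ep Eq; exists ((r' + (n - r)) %% n); first by rewrite ltn_mod.
move=> x; rewrite Ep -iterD (iter_mod _ sin) Eq.
have -> : ((r + (r' + (n - r)) %% n) %% n)%N = r' by rewrite modnDmr addnCA subnKC ?(ltnW rn) // modnDr modn_small.
by [].
Qed.

Lemma fwd_dist (m0 p : R -> Prop) r k :
  (forall i j : nat, (i < n)%N -> (j < n)%N ->
           seteq (simg s si i m0) (simg s si j m0) -> i = j) ->
  (r < n)%N -> (forall x, p x <-> m0 (iter r si x)) ->
  (0 < k)%N -> (k < n)%N -> ~ seteq (fun x => p (iter k si x)) p.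
Proof.
move=> Osize rn Ep k0 kn E.
have lt : (r + k) %% n < n by rewrite ltn_mod.
have : (r + k) %% n = r.
  apply: (Osize _ _ lt rn) => x; rewrite !simg_nat -(iter_mod _ sin) iterD.
  by rewrite -Ep -Ep; apply: E.
case: (ltnP (r + k) n) => h; first by rewrite modn_small //; lia.
by rewrite -{1}(subnK h) modnDr modn_small; lia.
Qed.

Lemma iter_fwd k (p : R -> Prop) x : iter k (fun p x => p (si x)) p x = p (iter k si x).
Proof. by elim: k x => //= k IH x; rewrite IH -iterSr. Qed.

Lemma iter_bwd k (p : R -> Prop) x : iter k (fun p x => p (s x)) p x = p (iter k s x).
Proof. by elim: k x => //= k IH x; rewrite IH -iterSr. Qed.

Lemma si_as_s K x : (K < n)%N -> iter K si x = iter ((n - K) %% n) s x.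
Proof.
move=> Kn; case: K Kn => [|K] Kn; first by rewrite subn0 modnn.
rewrite modn_small; last by lia.
have E : iter K.+1 s (iter (n - K.+1) s x) = x.
  by rewrite -iterD subnKC ?sn //; lia.
by rewrite -{1}E (iter_cancel s si _ s_si).
Qed.

Lemma si_its k x : si (iter k s x) = iter k s (si x).
Proof. by apply: (can_inj s_si); rewrite si_s -iterS iterSr si_s. Qed.

Lemma bwd_dist (m0 p : R -> Prop) r k :
  (forall i j : nat, (i < n)%N -> (j < n)%N ->
           seteq (simg s si i m0) (simg s si j m0) -> i = j) ->
  (r < n)%N -> (forall x, p x <-> m0 (iter r si x)) ->
  (0 < k)%N -> (k < n)%N -> ~ seteq (fun x => p (si (iter k s x))) (fun x => p (si x)).
Proof.
move=> Osize rn Ep k0 kn E; apply: (fwd_dist _ _ _ _ Osize rn Ep k0 kn) => y.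
have := E (s (iter k si y)).
rewrite -iterSr iterS !s_si (iter_cancel si s _ si_s).
by move=> E'; split => h; apply/E'.
Qed.

End Orb.

Lemma wt_tr (R : comNzRingType) (M : zmodType) (rho : int -> R -> M -> M) (p q : R -> Prop) u :
  (forall x, q x -> p x) -> wt rho p u -> wt rho q u.
Proof. by move=> pq wu r qr; apply: wu; apply: pq. Qed.

Theorem lemma3p17
  (k : fieldType) (R : comAlgType k)
  (* R is a commutative domain *)
  (Rdom : forall x y : R, x * y = 0 -> x = 0 \/ y = 0)
  (* sigma is a k-algebra automorphism of R with inverse si *)
  (s : {rmorphism R -> R}) (si : R -> R)
  (s_lin : forall (c : k) (x : R), s (c *: x) = c *: s x)
  (s_si : cancel s si) (si_s : cancel si s)
  (H J : R -> Prop) (HH : is_ideal H) (HJ : is_ideal J)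
  (* standing assumption: I^(n) <> 0 for all n *)
  (Inz : forall z : int, exists x, Iz s si H J z x /\ x != 0)
  (* sigma^n = id *)
  (n : nat) (n_gt0 : (0 < n)%N) (sn : forall x : R, iter n s x = x)
  (* the orbit O of the maximal ideal m0 has size n and contains a break *)
  (m0 : R -> Prop) (m0max : maximal_ideal m0)
  (Osize : forall i j : nat, (i < n)%N -> (j < n)%N ->
           seteq (simg s si i m0) (simg s si j m0) -> i = j)
  (Obreak : exists m' : R -> Prop, in_sorbit s si m0 m' /\ is_break s si H J m')
  (* M is a simple B-module and an R-weight module with Supp(M) in O *)
  (M : zmodType) (rho : int -> R -> M -> M)
  (Mmod : is_BR_module s si H J rho)
  (Msimple : simple_module s si H J rho)
  (Mweight : weight_module rho)
  (Msupp : forall m, in_supp rho m -> in_sorbit s si m0 m)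
  (* m is a break in O *)
  (m : R -> Prop) (mO : in_sorbit s si m0 m) (mbreak : is_break s si H J m) :
  ~ (J_break J rho m /\ H_break s si H rho m) /\
  (J_break J rho m ->
     (forall m', in_sorbit s si m0 m' -> is_break s si H J m' -> J_break J rho m') /\
     (forall m', in_supp rho m' <-> in_sorbit s si m0 m')) /\
  (H_break s si H rho m ->
     (forall m', in_sorbit s si m0 m' -> is_break s si H J m' -> H_break s si H rho m') /\
     (forall m', in_supp rho m' <-> in_sorbit s si m0 m')).
Proof.
have s_rm : rmor s.
  by split; [exact: rmorph0 | exact: rmorph1 | exact: rmorphD | exact: rmorphM].
have [rm rmn Em] := orbit_rep _ _ _ s_si si_s _ n_gt0 sn _ _ mO.
have relf : forall m', in_sorbit s si m0 m' ->
    exists2 K, (K < n)%N & forall x, m' x <-> m (iter K si x).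
  move=> m' O'; have [r' r'n E'] := orbit_rep _ _ _ s_si si_s _ n_gt0 sn _ _ O'.
  exact: (rel_rep _ _ _ si_s _ n_gt0 sn _ _ _ _ _ rmn r'n Em E').
have relb : forall m', in_sorbit s si m0 m' ->
    exists2 K, (K < n)%N & forall x, m' x <-> m (iter K s x).
  move=> m' O'; have [K Kn EK] := relf m' O'.
  exists ((n - K) %% n)%N; first by rewrite ltn_mod.
  by move=> x; rewrite EK (si_as_s _ _ _ s_si _ n_gt0 sn K x Kn).
have distf : forall i, (0 < i)%N -> (i < n)%N ->
    ~ seteq (iter i (fun p x => p (si x)) m) m.
  move=> i k0 kn E; apply: (fwd_dist _ _ _ si_s _ n_gt0 sn _ _ _ _ Osize rmn Em k0 kn) => x.
  by have E' := E x; rewrite (iter_fwd _ si i) in E'; exact: E'.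
have distb : forall i, (0 < i)%N -> (i < n)%N ->
    ~ seteq (iter i (fun p x => p (s x)) (fun x => m (si x))) (fun x => m (si x)).
  move=> i k0 kn E; apply: (bwd_dist _ _ _ s_si si_s _ n_gt0 sn _ _ _ _ Osize rmn Em k0 kn) => x.
  by have E' := E x; rewrite (iter_bwd _ s i) in E'; exact: E'.
have maxO : forall m', in_sorbit s si m0 m' -> maximal_ideal m'.
  move=> m' O'; have [r' r'n E'] := orbit_rep _ _ _ s_si si_s _ n_gt0 sn _ _ O'.
  apply: (max_seteq (I := fun x => m0 (iter r' si x))); first by move=> x; apply: iff_sym.
  apply: (max_pre (phi := iter r' si) (psi := iter r' s)).
  - apply: rmor_iter; exact: (si_rm _ _ _ s_si si_s s_rm).
  - exact: rmor_iter.
  - exact: iter_cancel.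
  - exact: iter_cancel.
  - exact: m0max.
have notboth : ~ (J_break J rho m /\ H_break s si H rho m).
  move=> [jb hb]; exact: (fwd_G1 _ _ _ _ _ s_si si_s s_rm HJ _ _ Mmod Msimple _ mbreak jb hb).
split => //.
split.
  move=> jb; have [j0 [v0 [Jj0 [wv0 nz0]]]] := jb.
  have v0nz : v0 != 0.
    by apply: contraNneq nz0 => ->; apply/eqP; exact: (rho_v0 Mmod 1 j0 Jj0).
  have killf := fwd_G2a _ _ _ _ _ s_si si_s s_rm HJ _ _ Mmod Msimple _ mbreak.
  have killf2 := fwd_G2b _ _ _ _ _ s_si si_s s_rm HJ _ _ Mmod Msimple _ mbreak.
  split.
    move=> m' O' _; have [K Kn EK] := relf m' O'.
    case: (posnP K) => [K0|K0].
      exists j0, v0; split => //; split => //.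
      by apply: wt_tr wv0 => x /EK; rewrite K0.
    apply: NNPP => nJ.
    have := killf K jb (fun i k0 kK => distf i k0 (leq_ltn_trans kK Kn)).
    have hyp : forall j u, J j -> wt rho (iter K (fun p x => p (si x)) m) u -> rho 1 j u = 0.
      move=> j u Jj wu; apply: NNPP => ne; apply: nJ; exists j, u; split => //; split.
        by apply: wt_tr wu => x /EK; rewrite (iter_fwd _ si K).
      by apply/eqP.
    move=> /(_ hyp v0 wv0) v00; by move/eqP: v0nz.
  move=> m'; split; first exact: Msupp.
  move=> O'; split; first exact: maxO.
  apply: NNPP => nv.
  have zero : forall v, wt rho m' v -> v = 0.
    by move=> v wv; apply: NNPP => ne; apply: nv; exists v; split => //; apply/eqP.
  have [K Kn EK] := relf m' O'.
  case: (posnP K) => [K0|K0].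
    move/eqP: v0nz; apply; apply: zero; apply: wt_tr wv0 => x /EK; by rewrite K0.
  have hyp : forall u, wt rho (iter K (fun p x => p (si x)) m) u -> u = 0.
    move=> u wu; apply: zero; apply: wt_tr wu => x /EK; by rewrite (iter_fwd _ si K).
  have := killf2 K.-1 jb (fun i k0 kK => distf i k0 (leq_ltn_trans kK (leq_ltn_trans (leq_pred K) Kn))).
  rewrite prednK // => /(_ hyp v0 wv0) v00; by move/eqP: v0nz.
move=> hb; have [h0 [w0 [Hh0 [ww0 nzw0]]]] := hb.
have Iy : Iz s si H J (-1) (si h0) by change (H (s (si h0))); rewrite si_s.
have w0nz : w0 != 0.
  by apply: contraNneq nzw0 => ->; apply/eqP; exact: (rho_v0 Mmod (-1) (si h0) Iy).
have ww0' : wt rho (fun x => m (si x)) w0 by exact: ww0.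
have killb := bwd_G2a _ _ _ _ _ s_si si_s s_rm HH _ _ Mmod Msimple _ mbreak.
have killb2 := bwd_G2b _ _ _ _ _ s_si si_s s_rm HH _ _ Mmod Msimple _ mbreak.
split.
  move=> m' O' _; have [K Kn EK] := relb m' O'.
  case: (posnP K) => [K0|K0].
    exists h0, w0; split => //; split => //.
    move=> r Hr; apply: ww0; change (m (si r)).
    have := EK (si r); rewrite K0 /= => E; apply/E; exact: Hr.
  apply: NNPP => nH.
  have hyp : forall j u, H (s j) ->
      wt rho (iter K (fun p x => p (s x)) (fun x => m (si x))) u -> rho (-1) j u = 0.
    move=> j u Hj wu; apply: NNPP => ne; apply: nH; exists (s j), u; split => //; split.
      move=> r Hr; apply: wu; rewrite (iter_bwd _ s K) /=.
      rewrite (si_its _ _ _ s_si si_s K r); apply/EK; exact: Hr.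
    by rewrite s_si; apply/eqP.
  have := killb K hb (fun i k0 kK => distb i k0 (leq_ltn_trans kK Kn)) hyp w0 ww0'.
  by move=> w00; move/eqP: w0nz.
move=> m'; split; first exact: Msupp.
move=> O'; split; first exact: maxO.
apply: NNPP => nv.
have zero : forall v, wt rho m' v -> v = 0.
  by move=> v wv; apply: NNPP => ne; apply: nv; exists v; split => //; apply/eqP.
have [K Kn EK] := relb m' O'.
case: (ltnP K.+1 n) => Kn'.
  have hyp : forall u, wt rho (iter K.+1 (fun p x => p (s x)) (fun x => m (si x))) u -> u = 0.
    move=> u wu; apply: zero => r Hr; apply: wu; rewrite (iter_bwd _ s K.+1) /= ?iterS s_si.
    apply/EK; exact: Hr.
  have := killb2 K hb (fun i k0 kK => distb i k0 (leq_ltn_trans kK Kn)) hyp w0 ww0'.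
  by move=> w00; move/eqP: w0nz.
have eK : K = n.-1 by lia.
have itn : forall x, iter n.-1 s x = si x.
  by move=> x; apply: (can_inj s_si); rewrite si_s -iterS prednK // sn.
move/eqP: w0nz; apply; apply: zero => r Hr; apply: ww0; change (m (si r)).
rewrite -itn -eK; apply/EK; exact: Hr.
Qed.
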